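(* If $L$ is a finite ranked lattice, then $$\mathcal{M}(L,t)=t^{\mathrm{rk}(L)}\sum_{y\in L}t^{\mathrm{rk}(L)-\mathrm{rk}(y)}\,\chi(L^y,t)\,\chi\big((L^{\mathrm{op}})^y,t^{-1}\big).$$
   Context: $L$ has minimum $\hat 0$, maximum $\hat 1$, rank function $\mathrm{rk}$ with $\mathrm{rk}(\hat 0)=0$, and $\mathrm{rk}(L)=\mathrm{rk}(\hat 1)$. $L^{\mathrm{op}}$ is $L$ with reversed order. For $y\in L$, $L^y=\{x\in L: x\ge y\}$ and $(L^{\mathrm{op}})^y=\{x\in L: x\le y\}$ ordered by the reverse of the order of $L$. For a finite ranked lattice $K$ with minimum $\hat 0_K$ and Möbius function $\mu_K$ ($\mu_K(u,u)=1$, $\sum_{u\le a\le v}\mu_K(u,a)=0$ for $u<v$), the characteristic polynomial is $\chi(K,t)=\sum_{x\in K}\mu_K(\hat 0_K,x)\,t^{\mathrm{rk}(K)-\mathrm{rk}_K(x)}$, where $\mathrm{rk}_K$ is the rank function of $K$ (with $\mathrm{rk}_K(\hat 0_K)=0$) and $\mathrm{rk}(K)$ its maximum. Let $\rho(x,y,z)=3\,\mathrm{rk}(L)-\mathrm{rk}(x)-\mathrm{rk}(y)-\mathrm{rk}(z)$, $\delta_3(x,y,z)=1$ if $x=y=z$ and $0$ otherwise, $J$ the unique integer-valued function on triples $x\le y\le z$ of $L$ with $\sum_{x\le a\le y\le b\le z}J(a,y,b)=\delta_3(x,y,z)$ for all $x\le y\le z$, and $\mathcal{M}(L,t)=\sum_{x\le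 y\le z}J(x,y,z)\,t^{\rho(x,y,z)}$. *)

(* Defs.v *)
From HB Require Import structures.
From mathcomp Require Import all_boot all_order all_algebra.
Set Implicit Arguments. Unset Strict Implicit. Unset Printing Implicit Defensive.
Import Order.TTheory GRing.Theory Num.Theory.

Definition covers (d : Order.disp_t) (L : finTBLatticeType d) (x y : L) : bool :=
  (x < y)%O && [forall z : L, ~~ ((x < z)%O && (z < y)%O)].

Definition ranked (d : Order.disp_t) (L : finTBLatticeType d) (rk : L -> nat) : Prop :=
  rk (\bot%O : L) = 0%N /\ (forall x y : L, covers x y -> rk y = (rk x).+1).

Definition is_mobius (T : finType) (S : {set T}) (le : rel T) (mu : T -> T -> int) : Prop :=
  (forall u, u \in S -> mu u u = 1%R) /\
  (forall u v, u \in S -> v \in S -> le u v -> u != v ->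
     (\sum_(a in S | le u a && le a v) mu u a)%R = 0%R).

Definition charpoly (T : finType) (R : unitRingType) (S : {set T})
    (mu : T -> T -> int) (m : T) (rkK : T -> nat) (t : R) : R :=
  (\sum_(x in S) (mu m x)%:~R * t ^ ((\max_(z in S) rkK z)%:Z - (rkK x)%:Z))%R.

Definition delta3 (T : eqType) (x y z : T) : int :=
  if (x == y) && (y == z) then 1%R else 0%R.

Definition rho (d : Order.disp_t) (L : finTBLatticeType d) (rk : L -> nat) (x y z : L) : int :=
  (3 * (rk \top%O)%:Z - (rk x)%:Z - (rk y)%:Z - (rk z)%:Z)%R.

Definition Mpoly (d : Order.disp_t) (L : finTBLatticeType d) (rk : L -> nat)
    (J : L -> L -> L -> int) (R : unitRingType) (t : R) : R :=
  (\sum_(x : L) \sum_(y : L) \sum_(z : L | (x <= y)%O && (y <= z)%O)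
      (J x y z)%:~R * t ^ (rho rk x y z))%R.

(* Main.v *)
Require Import Defs.
From HB Require Import structures.
From mathcomp Require Import all_boot all_order all_algebra.
From mathcomp Require Import zify ring.
Import Order.TTheory GRing.Theory Num.Theory.

Set Implicit Arguments. Unset Strict Implicit.
Local Open Scope ring_scope.

Lemma rk_mono (d : Order.disp_t) (L : finTBLatticeType d) (rk : L -> nat) :
  ranked rk -> forall x y : L, (x < y)%O -> (rk x < rk y)%N.
Proof.
move=> [_ Hc].
suff H: forall n (x y : L),
    (#|[set c : L | (x <= c)%O && (c <= y)%O]| < n)%N -> (x < y)%O -> (rk x < rk y)%N.
  by move=> x y; exact: (H _ x y (ltnSn _)).
elim=> [//|n IH] x y Hn Hxy.
case Hcov: (covers x y); first by rewrite (Hc _ _ Hcov).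
move: Hcov; rewrite /covers Hxy /= => /negbT /forallPn [z]; rewrite negbK => /andP [Hxz Hzy].
have Hs1: (#|[set c | (x <= c)%O && (c <= z)%O]| < #|[set c | (x <= c)%O && (c <= y)%O]|)%N.
  apply: proper_card; apply/properP; split.
    apply/subsetP => c; rewrite !inE => /andP [-> Hcz] /=; exact: le_trans Hcz (ltW Hzy).
  exists y; first by rewrite inE (ltW Hxy) lexx.
  by rewrite inE (ltW Hxy) /= lt_geF.
have Hs2: (#|[set c | (z <= c)%O && (c <= y)%O]| < #|[set c | (x <= c)%O && (c <= y)%O]|)%N.
  apply: proper_card; apply/properP; split.
    apply/subsetP => c; rewrite !inE => /andP [Hzc ->]; rewrite andbT; exact: le_trans (ltW Hxz) Hzc.
  exists x; first by rewrite inE (ltW Hxy) lexx.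
  by rewrite inE lt_geF.
apply: ltn_trans (IH x z _ Hxz) (IH z y _ Hzy).
  exact: leq_trans Hs1 Hn.
exact: leq_trans Hs2 Hn.
Qed.

Lemma rk_le (d : Order.disp_t) (L : finTBLatticeType d) (rk : L -> nat) :
  ranked rk -> forall x y : L, (x <= y)%O -> (rk x <= rk y)%N.
Proof.
move=> Hr x y; rewrite le_eqVlt => /orP [/eqP -> //|H].
exact: ltnW (rk_mono Hr H).
Qed.

Lemma sumU (d : Order.disp_t) (L : finTBLatticeType d) (mu : L -> L -> int) (y : L) :
  is_mobius [set x : L | (y <= x)%O] (fun a b => (a <= b)%O) mu ->
  forall z, (y <= z)%O ->
  \sum_(b | (y <= b)%O && (b <= z)%O) mu y b = (y == z)%:R.
Proof.
move=> [H1 H2] z Hyz. have Hy: y \in [set x | (y <= x)%O] by rewrite inE.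
case: eqVneq => [<-|Hne].
  rewrite (big_pred1 y) ?H1 // => b; by rewrite /= -eq_le eq_sym.
transitivity (\sum_(a in [set x | (y <= x)%O] | (y <= a)%O && (a <= z)%O) mu y a); last by rewrite H2 // inE.
apply: eq_bigl => b; rewrite inE; by case: (y <= b)%O.
Qed.

Lemma sumD (d : Order.disp_t) (L : finTBLatticeType d) (mu : L -> L -> int) (y : L) :
  is_mobius [set x : L | (x <= y)%O] (fun a b => (b <= a)%O) mu ->
  forall x, (x <= y)%O ->
  \sum_(a | (x <= a)%O && (a <= y)%O) mu y a = (x == y)%:R.
Proof.
move=> [H1 H2] x Hxy. have Hy: y \in [set x | (x <= y)%O] by rewrite inE.
case: eqVneq => [->|Hne].
  rewrite (big_pred1 y) ?H1 // => b; by rewrite /= -eq_le.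
transitivity (\sum_(a in [set x | (x <= y)%O] | (a <= y)%O && (x <= a)%O) mu y a); last by rewrite H2 // ?inE // eq_sym.
apply: eq_bigl => b; rewrite inE; by case: (b <= y)%O; case: (x <= b)%O.
Qed.

Lemma Jval (d : Order.disp_t) (L : finTBLatticeType d)
  (J : L -> L -> L -> int) (muU muD : L -> L -> L -> int) :
  (forall x y z : L, (x <= y)%O -> (y <= z)%O ->
     (\sum_(a : L | (x <= a)%O && (a <= y)%O)
        \sum_(b : L | (y <= b)%O && (b <= z)%O) J a y b)%R = delta3 x y z) ->
  (forall y : L, is_mobius [set x : L | (y <= x)%O] (fun a b => (a <= b)%O) (muU y)) ->
  (forall y : L, is_mobius [set x : L | (x <= y)%O] (fun a b => (b <= a)%O) (muD y)) ->
  forall x y z : L, (x <= y)%O -> (y <= z)%O -> J x y z = muD y y x * muU y y z.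
Proof.
move=> HJ HU HD x y z.
pose h a b := J a y b - muD y y a * muU y y b.
have rect: forall x z, (x <= y)%O -> (y <= z)%O ->
    \sum_(a | (x <= a)%O && (a <= y)%O) \sum_(b | (y <= b)%O && (b <= z)%O) h a b = 0.
  move=> x' z' hx hz; rewrite /h.
  under eq_bigr do rewrite sumrB.
  rewrite sumrB HJ // -big_distrlr /= (sumD (HD y)) // (sumU (HU y)) //.
  rewrite /delta3; by case: (x' == y); case: (y == z').
suff H: forall n x z, (x <= y)%O -> (y <= z)%O ->
    (#|[set c | (x <= c)%O && (c <= y)%O]| + #|[set c | (y <= c)%O && (c <= z)%O]| < n)%N ->
    h x z = 0.
  by move=> hx hz; apply/eqP; rewrite -subr_eq0; apply/eqP; apply: (H _ x z hx hz (ltnSn _)).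
elim=> [//|n IH] x' z' hx hz; rewrite ltnS => Hn.
have := rect x' z' hx hz.
rewrite (bigD1 x') /=; last by rewrite lexx hx.
rewrite (bigD1 z') /=; last by rewrite lexx hz.
rewrite big1 ?addr0; last first.
  move=> b /andP [/andP [Hyb Hbz] Hbne].
  apply: (IH x' b hx Hyb).
  apply: leq_trans _ Hn; rewrite ltn_add2l; apply: proper_card; apply/properP; split.
    apply/subsetP => c; rewrite !inE => /andP [-> Hcb] /=; exact: le_trans Hcb Hbz.
  exists z'; first by rewrite inE lexx hz.
  rewrite inE hz /=; apply/negP => Hzb; move/negP: Hbne; apply; by rewrite eq_le Hbz Hzb.
rewrite big1 ?addr0 //.
move=> a /andP [/andP [Hxa Hay] Hane].
apply: big1 => b /andP [Hyb Hbz].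
apply: (IH a b Hay Hyb).
apply: leq_trans _ Hn.
apply: (@leq_ltn_trans (#|[set c | (a <= c)%O && (c <= y)%O]| + #|[set c | (y <= c)%O && (c <= z')%O]|)).
  rewrite leq_add2l; apply: subset_leq_card; apply/subsetP => c; rewrite !inE => /andP [-> Hcb] /=; exact: le_trans Hcb Hbz.
rewrite ltn_add2r; apply: proper_card; apply/properP; split.
  apply/subsetP => c; rewrite !inE => /andP [Hac ->]; rewrite andbT; exact: le_trans Hxa Hac.
exists x'; first by rewrite inE lexx hx.
rewrite inE hx andbT; apply/negP => Hax; move/negP: Hane; apply; by rewrite eq_le Hax Hxa.
Qed.

Theorem proposition6p10 (d : Order.disp_t) (L : finTBLatticeType d) (rk : L -> nat)
  (J : L -> L -> L -> int) (muU muD : L -> L -> L -> int)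
  (R : comUnitRingType) (t : R) :
  ranked rk ->
  (forall x y z : L, (x <= y)%O -> (y <= z)%O ->
     (\sum_(a : L | (x <= a)%O && (a <= y)%O)
        \sum_(b : L | (y <= b)%O && (b <= z)%O) J a y b)%R = delta3 x y z) ->
  (forall y : L, is_mobius [set x : L | (y <= x)%O] (fun a b => (a <= b)%O) (muU y)) ->
  (forall y : L, is_mobius [set x : L | (x <= y)%O] (fun a b => (b <= a)%O) (muD y)) ->
  t \is a GRing.unit ->
  Mpoly rk J t =
  (t ^+ (rk \top%O) *
   \sum_(y : L) t ^ ((rk \top%O)%:Z - (rk y)%:Z) *
     charpoly [set x : L | (y <= x)%O] (muU y) y (fun x => (rk x - rk y)%N) t *
     charpoly [set x : L | (x <= y)%O] (muD y) y (fun x => (rk y - rk x)%N) t^-1)%R.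
Proof.
move=> Hrk HJ HU HD Ht.
have Hmono := rk_le Hrk.
have rk0 : rk \bot%O = 0%N by case: Hrk.
have maxU y : (\max_(z in [set x : L | (y <= x)%O]) (rk z - rk y))%N = (rk \top%O - rk y)%N.
  apply/eqP; rewrite eqn_leq; apply/andP; split.
    apply/bigmax_leqP => z _; apply: leq_sub2r; apply: Hmono; exact: lex1.
  by apply: (@leq_bigmax_cond _ _ _ \top%O); rewrite inE lex1.
have maxD y : (\max_(z in [set x : L | (x <= y)%O]) (rk y - rk z))%N = rk y.
  apply/eqP; rewrite eqn_leq; apply/andP; split.
    by apply/bigmax_leqP => z _; apply: leq_subr.
  have := @leq_bigmax_cond _ (fun z => z \in [set x : L | (x <= y)%O]) (fun z => (rk y - rk z)%N) \bot%O.
  by rewrite rk0 subn0 inE le0x; apply.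
rewrite /Mpoly /charpoly [LHS]exchange_big /= mulr_sumr; apply: eq_bigr => y _.
rewrite maxU maxD.
set SU := \sum_(x in [set x0 | (y <= x0)%O]) _.
set SD := \sum_(x in [set x0 | (x0 <= y)%O]) _.
rewrite (_ : t^+ rk \top%O * (_ * SU * SD) = (t^+ rk \top%O * t ^ ((rk \top%O)%:Z - (rk y)%:Z)) * (SU * SD)); last by rewrite !mulrA.
rewrite /SU /SD big_distrlr /= mulr_sumr.
under [RHS]eq_bigr do rewrite mulr_sumr.
rewrite [RHS]exchange_big /=.
under eq_bigr do rewrite big_mkcond /=.
rewrite [RHS]big_mkcond; apply: eq_bigr => x _; rewrite inE.
case Hx: (x <= y)%O; last by rewrite big1.
rewrite [RHS]big_mkcond; apply: eq_bigr => z _; rewrite inE /=.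
case Hz: (y <= z)%O => //.
have hxy := Hmono _ _ Hx; have hyz := Hmono _ _ Hz; have hzt := Hmono _ _ (lex1 z).
rewrite (Jval HJ HU HD Hx Hz) intrM exprz_inv.
have -> : ((rk \top%O - rk y)%N%:Z - (rk z - rk y)%N%:Z) = (rk \top%O)%:Z - (rk z)%:Z by lia.
have -> : - ((rk y)%:Z - (rk y - rk x)%N%:Z) = - (rk x)%:Z by lia.
have -> : t ^ rho rk x y z = t ^ (rk \top%O)%:Z * t ^ ((rk \top%O)%:Z - (rk y)%:Z) *
   t ^ ((rk \top%O)%:Z - (rk z)%:Z) * t ^ (- (rk x)%:Z).
  by rewrite -!exprzDr //; congr (_ ^ _); rewrite /rho; lia.
rewrite (_ : t ^+ rk \top%O = t ^ (rk \top%O)%:Z) //.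
ring.
Qed.
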